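(* Let $k\ge2$, $q_1,q_2$ positive integers, $m$ a real number, and $\gamma_2=\begin{pmatrix}a&b\\c&d\end{pmatrix}\in\Gamma_0(q_1q_2)$. If $\mathcal P_0\in\mathcal P(k;m,q_1)$, then the polynomial $\mathcal P_0|_{2-k}\gamma_2(x)=(cx+d)^{k-2}\mathcal P_0\!\left(\frac{ax+b}{cx+d}\right)$ also lies in $\mathcal P(k;m,q_1)$.
   Context: $\mathcal P(k;m,q)=\Big\{\sum_{n=0}^{k-2}a_nx^{k-n-2}\in\mathbb Q[x]:\ q^{n+1}a_n\in m\mathbb Z\text{ for all }n\Big\}$, where $m\mathbb Z=\{mt:t\in\mathbb Z\}$. *)

(* Defs.v *)
From HB Require Import structures.
From mathcomp Require Import all_boot all_order all_algebra.
From mathcomp Require Import reals.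
Set Implicit Arguments. Unset Strict Implicit. Unset Printing Implicit Defensive.
Import Order.TTheory GRing.Theory Num.Theory.
Local Open Scope ring_scope.

Definition in_mZ (R : realType) (m x : R) : Prop := exists t : int, x = m * t%:~R.

(* P(k; m, q): polynomials sum_{n=0}^{k-2} a_n x^{k-n-2} in Q[x]
   (i.e. degree <= k-2) with q^{n+1} a_n in m Z for all n.
   Here a_n is the coefficient of x^{k-2-n}, i.e. P`_(k-2-n). *)
Definition in_Pkmq (R : realType) (k : nat) (m : R) (q : nat) (P : {poly rat}) : Prop :=
  (size P <= k.-1)%N /\
  forall n : nat, (n <= k - 2)%N ->
    in_mZ m (ratr ((q%:R : rat) ^+ n.+1 * P`_(k - 2 - n))).

Definition inGamma0 (N : nat) (a b c d : int) : Prop :=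
  a * d - b * c = 1 /\ (N%:Z %| c)%Z.

(* Weight 2-k slash action on polynomials of degree <= k-2:
   (P|_{2-k} gamma)(x) = (cx+d)^{k-2} P((ax+b)/(cx+d))
                       = sum_i P_i (ax+b)^i (cx+d)^{k-2-i}. *)
Definition slash2k (k : nat) (a b c d : int) (P : {poly rat}) : {poly rat} :=
  \sum_(i < k.-1) P`_i *: (('X * (a%:~R)%:P + (b%:~R)%:P) ^+ i
                           * ('X * (c%:~R)%:P + (d%:~R)%:P) ^+ (k - 2 - i)).

(* Main.v *)
Require Import Defs.
From mathcomp Require Import all_boot all_order all_algebra.
From mathcomp Require Import reals.
From mathcomp Require Import ring zify.
Import Order.TTheory GRing.Theory Num.Theory.
Local Open Scope ring_scope.

Lemma coef_compZX (p : {poly rat}) (r : rat) j :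
  (p \Po (r *: 'X))`_j = r ^+ j * p`_j.
Proof.
rewrite comp_polyE coef_sum.
under eq_bigr => i _ do rewrite exprZn scalerA coefZ coefXn.
have [lt|ge] := ltnP j (size p).
  rewrite (bigD1 (Ordinal lt)) ?eqxx ?mulr1 /=; last by [].
  rewrite big1 ?addr0 ?eqxx ?mulr1 1?mulrC //.
  move=> i Hi; rewrite eq_sym. 
  case: eqP => [E|]; last by rewrite mulr0.
  by move: Hi; rewrite -val_eqE /= E eqxx.
rewrite big1 ?nth_default ?mulr0 //.
move=> i _; case: eqP => [E|_]; last by rewrite mulr0.
by move: (ltn_ord i); rewrite -E ltnNge ge.
Qed.

Lemma key (q : nat) (a b c' d : int) (i l j : nat) : 
  exists z : int,
  (q%:R : rat) ^+ i * (('X * (a%:~R)%:P + (b%:~R)%:P) ^+ i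
     * ('X * ((c' * q%:Z)%:~R)%:P + (d%:~R)%:P) ^+ l)`_j
  = (q%:R : rat) ^+ j * z%:~R.
Proof.
set G : {poly int} := ('X * a%:P + (b * q%:Z)%:P) ^+ i * ('X * c'%:P + d%:P) ^+ l.
exists G`_j.
have -> : (G`_j)%:~R = (map_poly (intr : int -> rat) G)`_j by rewrite coef_map.
rewrite -coef_compZX -coefZ.
suff -> : map_poly (intr : int -> rat) G \Po (q%:R *: 'X) = (q%:R : rat) ^+ i *: (('X * (a%:~R)%:P + (b%:~R)%:P) ^+ i
     * ('X * ((c' * q%:Z)%:~R)%:P + (d%:~R)%:P) ^+ l) by [].
rewrite /G rmorphM /= !rmorphXn /= !rmorphD !rmorphM /= map_polyX !map_polyC /=.
rewrite !rmorphXn /= !comp_polyD !comp_polyM !comp_polyX !comp_polyC.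
rewrite -!mul_polyC -[(q%:~R)]/(q%:R) polyC_exp.
set Q := (q%:R : rat)%:P; set A := (a%:~R : rat)%:P; set B := (b%:~R : rat)%:P.
set C := (c'%:~R : rat)%:P; set D := (d%:~R : rat)%:P.
have -> : Q * 'X * A + B * Q = Q * ('X * A + B) by ring.
have -> : Q * 'X * C + D = 'X * (C * Q) + D by ring.
by rewrite exprMn -mulrA.
Qed.

Lemma in_mZ0 (R : realType) (m : R) : in_mZ m 0.
Proof. by exists 0; rewrite mulr0. Qed.

Lemma in_mZD (R : realType) (m x y : R) : in_mZ m x -> in_mZ m y -> in_mZ m (x + y).
Proof. by move=> [s ->] [t ->]; exists (s + t); rewrite intrD mulrDr. Qed.

Theorem lemma6p2 (R : realType) (k q1 q2 : nat) (m : R) (a b c d : int)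
  (P0 : {poly rat}) :
  (2 <= k)%N -> (0 < q1)%N -> (0 < q2)%N ->
  inGamma0 (q1 * q2) a b c d ->
  in_Pkmq k m q1 P0 ->
  in_Pkmq k m q1 (slash2k k a b c d P0).
Proof.
move=> Hk Hq1 Hq2 [_ /dvdzP [c0 Hc0]] [Hsz Hc].
have Ec : c = (c0 * q2%:Z) * q1%:Z.
  by rewrite Hc0 PoszM; ring.
rewrite /slash2k Ec.
split.
  apply: (big_ind (fun p : {poly rat} => (size p <= k.-1)%N)).
  - by rewrite size_poly0.
  - by move=> x y Hx Hy; apply: leq_trans (size_add _ _) _; rewrite geq_max Hx Hy.
  move=> i _; apply: leq_trans (size_scale_leq _ _) _.
  apply: leq_trans (size_mul_leq _ _) _.
  have Hlin : forall u v : rat, (size ('X * u%:P + v%:P)%R <= 2)%N.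
    move=> u v; apply: leq_trans (size_add _ _) _; rewrite geq_max.
    apply/andP; split; last by apply: leq_trans (size_polyC_leq1 _) _.
    by apply: leq_trans (size_mul_leq _ _) _; rewrite size_polyX; have := size_polyC_leq1 u; lia.
  have Hexp : forall (u v : rat) e, (size (('X * u%:P + v%:P) ^+ e)%R <= e.+1)%N.
    move=> u v e; apply: leq_trans (size_exp_leq _ _) _.
    have := Hlin u v; move: (size _) => s Hs; rewrite ltnS.
    have Hs1 : (s.-1 <= 1)%N by lia.
    by apply: leq_trans (leq_mul Hs1 (leqnn e)) _; rewrite mul1n.
  have h1 := Hexp (a%:~R) (b%:~R) i.
  have h2 := Hexp ((c0 * q2 * q1)%:~R) (d%:~R) (k - 2 - i)%N.
  have := ltn_ord i; move: h1 h2; move: (size _) (size _) => s1 s2.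
  move: (nat_of_ord i) => i0; rewrite -!subn1; lia.
move=> n Hn.
have qne0 : (q1%:R : rat) != 0 by rewrite pnatr_eq0 -lt0n.
rewrite coef_sum mulr_sumr rmorph_sum.
apply: (big_ind (in_mZ m)); [exact: in_mZ0 | exact: in_mZD |].
move=> i _; rewrite coefZ.
have Hi := ltn_ord i.
have [z Hz] := key q1 a b (c0 * q2) d i (k - 2 - i)%N (k - 2 - n)%N.
have Hi' : (k - 2 - i <= k - 2)%N by lia.
have [t Ht] := Hc _ Hi'.
have Eki : (k - 2 - (k - 2 - i) = i)%N by lia.
rewrite Eki in Ht.
set E := nth _ (polyseq _) (k - 2 - n) in Hz *.
set p := P0`_i in Ht *.
set Q := (q1%:R : rat) in Hz Ht qne0 *.
have -> : Q ^+ n.+1 * (p * E) = Q ^+ (k - 2 - i).+1 * p * z%:~R.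
  apply: (mulfI (expf_neq0 i qne0)).
  transitivity (Q ^+ n.+1 * p * (Q ^+ i * E)); first by ring.
  rewrite Hz.
  transitivity (Q ^+ (n.+1 + (k - 2 - n)) * p * z%:~R); first by rewrite exprD; ring.
  have -> : (n.+1 + (k - 2 - n) = i + (k - 2 - i).+1)%N by lia.
  by rewrite exprD; ring.
rewrite rmorphM /= Ht ratr_int.
by exists (t * z); rewrite intrM mulrA.
Qed.
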